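(* Let $\mathcal A$ be an arrangement of $d$ lines in $\mathbb P^2$ and let $m$ be the multiplicity of one of its intersection points. (i) If $\mathcal A$ is free with exponents $d_1\le d_2$, then either $m=d_2+1$ or $m\le d_1+1$. (ii) If $\mathcal A$ is nearly free with exponents $d_1\le d_2$, then either $m=d_2$ or $m\le d_1$.
   Context: The multiplicity of an intersection point is the number of lines through it. Let $S=\mathbb C[x,y,z]$, $f$ the product of the linear forms of the lines, and $AR(f)=\{(a,b,c)\in S^3: af_x+bf_y+cf_z=0\}$. $\mathcal A$ is free with exponents $d_1\le d_2$ if $AR(f)$ is a free $S$-module with homogeneous basis of degrees $d_1,d_2$ (then $d_1+d_2=d-1$); it is nearly free with exponents $d_1\le d_2$ if $AR(f)$ has a minimal graded free resolution $0\to S(-d_2-1)\to S(-d_1)\oplus S(-d_2)^2\to AR(f)\to 0$ with $d_1+d_2=d$. *)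

(* Defs.v *)
From HB Require Import structures.
From mathcomp Require Import all_boot all_order all_algebra all_field.
From mathcomp Require Import Rstruct.
From mathcomp Require Import complex.
From mathcomp Require Import mpoly.
From Stdlib Require Import Reals.

Set Implicit Arguments.
Unset Strict Implicit.
Unset Printing Implicit Defensive.

Import GRing.Theory Num.Theory.
Local Open Scope ring_scope.

Definition CC : numClosedFieldType := (Rdefinitions.R)[i].

(* S = C[x,y,z], variables 'X_0 = x, 'X_1 = y, 'X_2 = z. *)
Notation SS := {mpoly CC[3]}.

Definition lin_form (a : 'rV[CC]_3) : SS :=
  \sum_(j < 3) (a 0 j)%:MP * 'X_j.

Definition line_arrangement (d : nat) (l : 'I_d -> 'rV[CC]_3) : Prop :=
  (forall i, l i != 0) /\
  (forall i j : 'I_d, i != j -> ~ exists c : CC, l i = c *: l j).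

Definition arr_poly (d : nat) (l : 'I_d -> 'rV[CC]_3) : SS :=
  \prod_(i < d) lin_form (l i).

Definition on_line (a p : 'rV[CC]_3) : bool :=
  \sum_(j < 3) a 0 j * p 0 j == 0.

Definition multiplicity (d : nat) (l : 'I_d -> 'rV[CC]_3) (p : 'rV[CC]_3) : nat :=
  #|[set i : 'I_d | on_line (l i) p]|.

Definition intersection_point (d : nat) (l : 'I_d -> 'rV[CC]_3) (p : 'rV[CC]_3) : Prop :=
  p != 0 /\ (2 <= multiplicity l p)%nat.

(* Elements of S^3 are functions 'I_3 -> S; (a,b,c) = (r 0, r 1, r 2). *)
Definition in_AR (f : SS) (r : 'I_3 -> SS) : Prop :=
  \sum_(j < 3) r j * f^`M(j) = 0.

Definition homog3 (k : nat) (r : 'I_3 -> SS) : Prop :=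
  forall j, r j \is k.-homog.

Definition free_with_exponents (f : SS) (d1 d2 : nat) : Prop :=
  (d1 <= d2)%nat /\
  exists r1 r2 : 'I_3 -> SS,
    [/\ in_AR f r1, in_AR f r2, homog3 d1 r1, homog3 d2 r2 &
      (forall r, in_AR f r ->
        exists! uv : SS * SS, forall j, r j = uv.1 * r1 j + uv.2 * r2 j)].

(* A is nearly free with exponents d1 <= d2 (d1 + d2 = d): AR(f) has a minimal
   graded free resolution
     0 -> S(-d2-1) --h--> S(-d1) (+) S(-d2)^2 --(r_0,r_1,r_2)--> AR(f) -> 0.
   Concretely: homogeneous generators r_0, r_1, r_2 of AR(f) of degrees d1, d2, d2
   (surjectivity), and the module of relations among them is free of rank one,
   generated by a nonzero h whose components are homogeneous of degrees
   d2+1-d1, 1, 1 (so that the map S(-d2-1) -> F_0 is graded of degree 0,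
   injective, with image the kernel; minimality holds since these degrees
   are positive). *)
Definition nearly_free_with_exponents (f : SS) (d d1 d2 : nat) : Prop :=
  (d1 <= d2)%nat /\ (d1 + d2 = d)%nat /\
  exists rho : 'I_3 -> ('I_3 -> SS),
  exists h : 'I_3 -> SS,
    [/\ (forall k, in_AR f (rho k)),
        (forall k, homog3 (if k == ord0 then d1 else d2) (rho k)),
        (forall r, in_AR f r ->
          exists u : 'I_3 -> SS, forall j, r j = \sum_(k < 3) u k * rho k j),
        (exists k, h k != 0) /\
        (forall k, h k \is (if k == ord0 then (d2 + 1 - d1)%nat else 1%nat).-homog) &
        (forall u : 'I_3 -> SS,
          (forall j, \sum_(k < 3) u k * rho k j = 0) <->
          (exists s : SS, forall k, u k = s * h k))].

(* Main.v *)
Require Import Defs.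
From HB Require Import structures.
From mathcomp Require Import all_boot all_order all_algebra all_field.
From mathcomp Require Import Rstruct complex mpoly.
From mathcomp Require Import ring zify.

Set Implicit Arguments.
Unset Strict Implicit.
Unset Printing Implicit Defensive.
Import GRing.Theory Num.Theory.
Local Open Scope ring_scope.

Definition i0 : 'I_3 := @Ordinal 3 0 isT.
Definition i1 : 'I_3 := @Ordinal 3 1 isT.
Definition i2 : 'I_3 := @Ordinal 3 2 isT.

Lemma sum3 (R : nmodType) (F : 'I_3 -> R) : \sum_(j<3) F j = F i0 + F i1 + F i2.
Proof. rewrite !big_ord_recl big_ord0 addr0 addrA; congr (F _ + F _ + F _); exact: val_inj. Qed.

Lemma ord3P (P : 'I_3 -> Prop) : P i0 -> P i1 -> P i2 -> forall j, P j.
Proof.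
move=> h0 h1 h2 [[|[|[|k]]] hk] //.
- by rewrite (_ : Ordinal hk = i0) //; apply: val_inj.
- by rewrite (_ : Ordinal hk = i1) //; apply: val_inj.
- by rewrite (_ : Ordinal hk = i2) //; apply: val_inj.
Qed.



Lemma mderivXU (k j : 'I_3) : ('X_k : SS)^`M(j) = (k == j)%:R.
Proof.
rewrite mderivX mnm1E; case: eqP => [->|_]; last by rewrite scale0r.
rewrite scale1r (_ : (U_(j) - U_(j))%MM = 0%MM) ?mpolyX0 //.
by apply/mnmP => i; rewrite mnmBE subnn mnm0E.
Qed.

Definition Lv (a : 'rV[CC]_3) (v : 'I_3 -> CC) : CC := \sum_(k<3) a 0 k * v k.

Lemma dlin (a : 'rV[CC]_3) j : (lin_form a)^`M(j) = (a 0 j)%:MP.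
Proof.
rewrite /lin_form sum3 !mderivD !mderiv_mulC !mderivXU.
move: j; apply: ord3P; rewrite /= ?eqxx; by rewrite !mulr0 !mulr1 ?add0r ?addr0.
Qed.

Lemma evlin (a : 'rV[CC]_3) v : (lin_form a).@[v] = Lv a v.
Proof.
by rewrite /lin_form /Lv !sum3 !mevalD !mevalM !mevalC !mevalXU.
Qed.

Definition Dd (c : 'I_3 -> CC) (P : SS) : SS := \sum_(j<3) (c j)%:MP * P^`M(j).

Lemma DdD c P Q : Dd c (P + Q) = Dd c P + Dd c Q.
Proof. rewrite /Dd !sum3 !mderivD; ring. Qed.

Lemma DdM c P Q : Dd c (P * Q) = Dd c P * Q + P * Dd c Q.
Proof. rewrite /Dd !sum3 !mderivM; ring. Qed.

Lemma Dd1 c : Dd c 1 = 0.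
Proof. by rewrite /Dd sum3 -mpolyC1 !mderivC !mulr0 !addr0. Qed.

Lemma Ddlin c a : Dd c (lin_form a) = (Lv a c)%:MP.
Proof. rewrite /Dd /Lv !sum3 !dlin !mpolyCD !mpolyCM; ring. Qed.

Lemma evDd c P v : (Dd c P).@[v] = \sum_(j<3) c j * (P^`M(j)).@[v].
Proof. by rewrite /Dd !sum3 !mevalD !mevalM !mevalC. Qed.

Definition Eu (P : SS) : SS := \sum_(j<3) 'X_j * P^`M(j).

Lemma EuM P Q : Eu (P * Q) = Eu P * Q + P * Eu Q.
Proof. rewrite /Eu !sum3 !mderivM; ring. Qed.

Lemma Eulin a : Eu (lin_form a) = lin_form a.
Proof. rewrite /Eu !sum3 !dlin /lin_form sum3; ring. Qed.

Lemma evEu P v : (Eu P).@[v] = \sum_(j<3) v j * (P^`M(j)).@[v].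
Proof. by rewrite /Eu !sum3 !mevalD !mevalM !mevalXU. Qed.

Lemma lin_homog a : lin_form a \is 1.-homog.
Proof.
rewrite /lin_form; apply: rpred_sum => k _.
rewrite mul_mpolyC; apply: dhomogZ; rewrite (@dhomogX _ _ _ _ U_(k)); exact/eqP/(mdeg1 k).
Qed.

Section Prod.
Variable (d : nat) (l : 'I_d -> 'rV[CC]_3).

Definition Pr (s : seq 'I_d) : SS := \prod_(i <- s) lin_form (l i).

Lemma Pr_cons x s : Pr (x :: s) = lin_form (l x) * Pr s.
Proof. by rewrite /Pr big_cons. Qed.

Lemma Pr_nil : Pr [::] = 1.
Proof. by rewrite /Pr big_nil. Qed.

Lemma Eu_Pr s : Eu (Pr s) = (size s)%:R * Pr s.
Proof.
elim: s => [|x s IH]; first by rewrite Pr_nil mul0r /Eu sum3 -mpolyC1 !mderivC !mulr0 !addr0.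
rewrite Pr_cons EuM IH Eulin /= -[(size s).+1]addn1 natrD; ring.
Qed.

Lemma Pr_homog s : Pr s \is (size s).-homog.
Proof.
elim: s => [|x s IH]; first by rewrite Pr_nil dhomog1.
rewrite Pr_cons /= -[(size s).+1]add1n; exact: dhomogM (lin_homog _) IH.
Qed.

Lemma Dd_Pr_homog c s : Dd c (Pr s) \is (size s).-1.-homog.
Proof.
elim: s => [|x s IH]; first by rewrite Pr_nil Dd1 dhomog0.
rewrite Pr_cons DdM Ddlin /=; apply: dhomogD.
  by rewrite mul_mpolyC; apply: dhomogZ; apply: Pr_homog.
case: s IH => [|y s] IH.
  by rewrite Pr_nil Dd1 mulr0 dhomog0.
by rewrite /= -[(size s).+1]add1n; apply: dhomogM (lin_homog _) IH.
Qed.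

Lemma Dd_Pr0 c s : (forall i, i \in s -> Lv (l i) c = 0) -> Dd c (Pr s) = 0.
Proof.
elim: s => [|x s IH] H; first by rewrite Pr_nil Dd1.
rewrite Pr_cons DdM Ddlin H ?mem_head // IH; first by rewrite mulr0 mul0r addr0.
by move=> i hi; apply: H; rewrite in_cons hi orbT.
Qed.

Lemma ev_Pr s v : (Pr s).@[v] = \prod_(i <- s) Lv (l i) v.
Proof.
elim: s => [|x s IH]; first by rewrite Pr_nil big_nil meval1.
by rewrite Pr_cons big_cons mevalM evlin IH.
Qed.

Lemma ev_Pr0 s v : (Pr s).@[v] = 0 -> exists2 i, i \in s & Lv (l i) v = 0.
Proof.
rewrite ev_Pr; elim: s => [|x s IH]; first by rewrite big_nil => /eqP; rewrite oner_eq0.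
rewrite big_cons => /eqP; rewrite mulf_eq0 => /orP[/eqP h|/eqP h].
  by exists x; rewrite ?mem_head.
by case: (IH h) => i hi hv; exists i; rewrite ?in_cons ?hi ?orbT.
Qed.

Lemma ev_Dd_Pr s c v : uniq s -> (Pr s).@[v] = 0 -> (Dd c (Pr s)).@[v] = 0 ->
  (exists i j, [/\ i \in s, j \in s, i != j, Lv (l i) v = 0 & Lv (l j) v = 0])
  \/ (exists2 i, i \in s & (Lv (l i) v = 0 /\ Lv (l i) c = 0)).
Proof.
elim: s => [|x s IH]; first by rewrite Pr_nil meval1 => _ /eqP; rewrite oner_eq0.
rewrite /= => /andP[xs us].
rewrite Pr_cons DdM Ddlin !mevalD !mevalM evlin !mevalC.
have [hx|hx] := eqVneq (Lv (l x) v) 0.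
  rewrite hx !mul0r addr0 => _ /eqP; rewrite mulf_eq0 => /orP[/eqP hc|/eqP hs].
    by right; exists x; rewrite ?mem_head.
  case: (ev_Pr0 hs) => i hi hv; left; exists x, i; split=> //.
  - exact: mem_head.
  - by rewrite in_cons hi orbT.
  - by apply/eqP=> exi; move: xs; rewrite exi hi.
move=> /eqP; rewrite mulf_eq0 (negbTE hx) /= => /eqP hs.
rewrite hs mulr0 add0r => /eqP; rewrite mulf_eq0 (negbTE hx) /= => /eqP hd.
case: (IH us hs hd) => [[i [j [hi hj hij hvi hvj]]]|[i hi hv]].
  by left; exists i, j; rewrite !in_cons hi hj !orbT.
by right; exists i; rewrite ?in_cons ?hi ?orbT.
Qed.

End Prod.

Definition top (k : nat) (Q : {poly CC}) (c : CC) := (size Q <= k.+1)%N /\ Q`_k = c.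

Lemma topM k l Q R c c' : top k Q c -> top l R c' -> top (k + l) (Q * R) (c * c').
Proof.
move=> [sQ cQ] [sR cR]; split.
  apply: leq_trans (size_mul_leq _ _) _; rewrite -subn1; lia.
rewrite coefM (bigD1 (Ordinal (leq_addr l k.+1 : k < (k+l).+1)%N)) //= addKn cQ cR.
rewrite big1 ?addr0 // => j /eqP hj.
have [ltjk|ltkj|ejk] := ltngtP j k.
- rewrite (@nth_default _ _ R) ?mulr0 //; apply: leq_trans sR _.
  lia.
- by rewrite (@nth_default _ _ Q) ?mul0r //; apply: leq_trans sQ _.
- by case: hj; apply: val_inj; rewrite /= ejk.
Qed.

Lemma topX k Q c n : top k Q c -> top (k * n) (Q ^+ n) (c ^+ n).
Proof.
move=> h; elim: n => [|n IH].
  by rewrite muln0 !expr0; split; [rewrite size_poly1 | rewrite coef1].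
by rewrite !exprS mulnS; apply: topM.
Qed.

Lemma top_lin (a b : CC) : top 1 (a%:P + b *: 'X) b.
Proof.
split; last by rewrite coefD coefC coefZ coefX eqxx (_ : (1 == 0)%N = false) // add0r mulr1.
apply: leq_trans (size_polyD _ _) _; rewrite geq_max size_polyC.
apply/andP; split; first by case: (a != 0).
by rewrite (leq_trans (size_scale_leq _ _)) ?size_polyX.
Qed.

Definition hl (a b : 'I_3 -> CC) (j : 'I_3) : {poly CC} := (a j)%:P + (b j) *: 'X.

Definition restr (a b : 'I_3 -> CC) (P : SS) : {poly CC} := mmap (@polyC CC) (hl a b) P.

Lemma restrD a b : {morph restr a b : x y / x + y}.
Proof. exact: mmapD. Qed.
Lemma restrB a b : {morph restr a b : x y / x - y}.
Proof. exact: mmapB. Qed.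
Lemma restrM a b : {morph restr a b : x y / x * y}.
Proof. exact: (rmorphM (mmap (@polyC CC) (hl a b))). Qed.
Lemma restrC a b c : restr a b c%:MP = c%:P.
Proof. exact: mmapC. Qed.
Lemma restrXU a b j : restr a b 'X_j = hl a b j.
Proof. by rewrite /restr mmapX mmap1U. Qed.

Lemma prod3 (R : comPzSemiRingType) (F : 'I_3 -> R) : \prod_(j<3) F j = F i0 * F i1 * F i2.
Proof. rewrite !big_ord_recl big_ord0 mulr1 mulrA; congr (F _ * F _ * F _); exact: val_inj. Qed.

Lemma restr_horner a b P s : (restr a b P).[s] = P.@[fun j => a j + s * b j].
Proof.
rewrite /restr /mmap mevalE horner_sum; apply: eq_bigr => m _.
rewrite hornerM hornerC /mmap1 horner_prod; congr (_ * _); apply: eq_bigr => i _.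
by rewrite horner_exp /hl hornerD hornerC hornerZ hornerX mulrC.
Qed.

Lemma restr_top a b P e : P \is e.-homog -> top e (restr a b P) P.@[b].
Proof.
move=> /dhomogP hP.
rewrite /restr /mmap mevalE.
have H : forall m, m \in msupp P ->
   top e ((P@_m)%:P * mmap1 (hl a b) m) (P@_m * \prod_i b i ^+ m i).
  move=> m hm.
  have E : (m i0 + m i1 + m i2)%N = e.
    by rewrite -(hP m hm) /= mdegE sum3.
  rewrite -E /mmap1 !prod3.
  have ht : top 0 (P@_m)%:P P@_m.
    by split; [rewrite size_polyC leq_b1 | rewrite coefC].
  rewrite -[(m i0 + _ + _)%N]add0n !mulrA.
  have := topM ht (topX (m i0) (top_lin (a i0) (b i0))).
  move=> /topM /(_ (topX (m i1) (top_lin (a i1) (b i1)))).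
  move=> /topM /(_ (topX (m i2) (top_lin (a i2) (b i2)))).
  by rewrite !mul1n !addnA.
elim: (msupp P) H => [|m s IH] H.
  by rewrite !big_nil; split; [rewrite size_poly0 | rewrite coef0].
rewrite !big_cons.
have [s1 c1] := H m (mem_head _ _).
have [s2 c2] := IH (fun m' hm' => H m' (@mem_behead _ (m :: s) _ hm')).
split; last by rewrite coefD c1 c2.
by apply: leq_trans (size_polyD _ _) _; rewrite geq_max s1 s2.
Qed.

Lemma top_root k Q c : top k Q c -> c != 0 -> (0 < k)%N -> exists x, root Q x.
Proof.
move=> [sQ cQ] c0 k0; apply/closed_rootP.
have : (k < size Q)%N.
  by rewrite ltnNge; apply/negP => hs; move: c0; rewrite -cQ nth_default // eqxx.
by move=> h; apply/eqP => h1; move: h; rewrite h1 ltnS leqn0 => /eqP h2; move: k0; rewrite h2.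
Qed.

Lemma poly_nonroot (Q : {poly CC}) : Q != 0 -> exists x, ~~ root Q x.
Proof.
move=> hQ; pose rs := [seq (i%:R : CC) | i <- iota 0 (size Q)].
have urs : uniq rs.
  rewrite map_inj_uniq ?iota_uniq // => i j /eqP; rewrite eqr_nat => /eqP //.
case: (boolP (all (root Q) rs)) => [h|].
  by have := max_poly_roots hQ h urs; rewrite size_map size_iota ltnn.
by case/allPn => x _ hx; exists x.
Qed.

Definition kr (N : nat) (j : 'I_3) : {poly CC} := 'X ^+ (N ^ j).

Definition enc (N : nat) (m : 'X_{1..3}) : nat := (m i0 + N * (m i1 + N * m i2))%N.

Lemma enc_inj N (m m' : 'X_{1..3}) : (forall j, m j < N)%N -> (forall j, m' j < N)%N ->
  enc N m = enc N m' -> m = m'.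
Proof.
move=> hm hm' E.
have N0 : (0 < N)%N by apply: leq_ltn_trans (hm i0).
have H : forall (a x a' x' : nat), (a < N)%N -> (a' < N)%N -> (a + N * x = a' + N * x')%N -> a = a' /\ x = x'.
  move=> a x a' x' ha ha' e.
  have e1 : ((a + N * x) %% N = (a' + N * x') %% N)%N by rewrite e.
  rewrite ![(_ + N * _)%N]addnC ![(N * _)%N]mulnC !modnMDl !modn_small // in e1.
  split=> //; subst a'.
  by move/eqP: e; rewrite eqn_add2l eqn_mul2l (negbTE (lt0n_neq0 N0)) => /eqP.
case: (H _ _ _ _ (hm i0) (hm' i0) E) => e0 E1.
case: (H _ _ _ _ (hm i1) (hm' i1) E1) => e1 e2.
apply/mnmP; apply: ord3P => //.
Qed.

Lemma mmap1_kr N m : mmap1 (kr N) m = 'X ^+ (enc N m).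
Proof.
rewrite /mmap1 prod3 /kr /enc -!exprM -!exprD /=.
by congr (GRing.exp _ _); rewrite expn0 expn1 mul1n; lia.
Qed.

Lemma mpoly_nonroot (P : SS) : P != 0 -> exists v, P.@[v] != 0.
Proof.
move=> hP; set N := msize P.
have hb : forall m, m \in msupp P -> forall j, (m j < N)%N.
  move=> m hm j; apply: leq_ltn_trans (msize_mdeg_lt hm).
  rewrite mdegE sum3; move: j; apply: ord3P => /=; lia.
set Q := mmap (@polyC CC) (kr N) P.
have hQ : Q != 0.
  have [m hm] : exists m, m \in msupp P.
    by case E: (msupp P) => [|m s]; [move: hP; rewrite -msupp_eq0 E | exists m; rewrite mem_head].
  apply/eqP => /(congr1 (fun q : {poly CC} => q`_(enc N m))).
  rewrite coef0 /Q /mmap coef_sum (bigD1_seq m) ?msupp_uniq //= big1_seq.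
    rewrite addr0 mmap1_kr coefCM coefXn eqxx mulr1 => /eqP; rewrite mcoeff_eq0 hm //.
  move=> m' /andP[nm' hm']; rewrite mmap1_kr coefCM coefXn.
  case: eqP; rewrite ?mulr0 // => e.
  have e' := enc_inj (hb _ hm) (hb _ hm') e.
  by move: nm'; rewrite e' eqxx.
case: (poly_nonroot hQ) => x hx; exists (fun j => x ^+ (N ^ j)).
move: hx; rewrite /root /Q /mmap mevalE horner_sum.
congr (_ != 0); apply: eq_bigr => m _; rewrite hornerM hornerC /mmap1 horner_prod.
by congr (_ * _); apply: eq_bigr => i _; rewrite horner_exp /kr horner_exp hornerX.
Qed.

Section Vec.
Variable R : comNzRingType.
Implicit Types u v w : 'I_3 -> R.

Definition cr u v (k : 'I_3) : R :=
  if val k == 0%N then u i1 * v i2 - u i2 * v i1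
  else if val k == 1%N then u i2 * v i0 - u i0 * v i2
  else u i0 * v i1 - u i1 * v i0.

Definition dt u v : R := \sum_(j<3) u j * v j.

Lemma cr0 u v : cr u v i0 = u i1 * v i2 - u i2 * v i1. Proof. by []. Qed.
Lemma cr1 u v : cr u v i1 = u i2 * v i0 - u i0 * v i2. Proof. by []. Qed.
Lemma cr2 u v : cr u v i2 = u i0 * v i1 - u i1 * v i0. Proof. by []. Qed.

Lemma dtE u v : dt u v = u i0 * v i0 + u i1 * v i1 + u i2 * v i2.
Proof. by rewrite /dt sum3. Qed.

Lemma cr_cr u v w k : cr (cr u v) w k = v k * dt u w - u k * dt v w.
Proof. rewrite dtE !dtE; move: k; apply: ord3P; rewrite ?cr0 ?cr1 ?cr2 ?cr0 ?cr1 ?cr2; ring. Qed.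

Lemma dt_cr_cyc u v w : dt u (cr v w) = dt v (cr w u).
Proof. rewrite !dtE ?cr0 ?cr1 ?cr2 ?cr0 ?cr1 ?cr2; ring. Qed.

Lemma dt_cr_self u v : dt u (cr u v) = 0.
Proof. rewrite !dtE ?cr0 ?cr1 ?cr2 ?cr0 ?cr1 ?cr2; ring. Qed.

Lemma crN u v k : cr u v k = - cr v u k.
Proof. move: k; apply: ord3P; rewrite ?cr0 ?cr1 ?cr2 ?cr0 ?cr1 ?cr2; ring. Qed.

Lemma cr_eq0 u v : (forall k, cr u v k = 0) -> forall i j, u i * v j = u j * v i.
Proof.
move=> h; have h0 := h i0; have h1 := h i1; have h2 := h i2.
rewrite cr0 in h0; rewrite cr1 in h1; rewrite cr2 in h2.
have E0 : u i1 * v i2 = u i2 * v i1 by apply/eqP; rewrite -subr_eq0 h0.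
have E1 : u i2 * v i0 = u i0 * v i2 by apply/eqP; rewrite -subr_eq0 h1.
have E2 : u i0 * v i1 = u i1 * v i0 by apply/eqP; rewrite -subr_eq0 h2.
apply: ord3P; apply: ord3P => //;
 first [exact: E0 | exact: (esym E0) | exact: E1 | exact: (esym E1) | exact: E2 | exact: (esym E2)].
Qed.

End Vec.

Section VecF.
Variable F : fieldType.
Implicit Types u v w : 'I_3 -> F.

Lemma cr_prop u v i : (forall k, cr u v k = 0) -> v i != 0 -> forall k, u k = (u i / v i) * v k.
Proof.
move=> h vi k; have := cr_eq0 h k i.
by move=> e; rewrite mulrAC -e mulfK.
Qed.

End VecF.

Definition rv (a : 'rV[CC]_3) : 'I_3 -> CC := fun j => a 0 j.
Definition ek (k : 'I_3) : 'I_3 -> CC := fun j => (j == k)%:R.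

Lemma Lv_ek a k : Lv a (ek k) = a 0 k.
Proof.
rewrite /Lv (bigD1 k) //= big1 ?addr0 /ek ?eqxx ?mulr1 // => j /negbTE ->.
by rewrite mulr0.
Qed.

Lemma Dd_ek k P : Dd (ek k) P = P^`M(k).
Proof.
rewrite /Dd (bigD1 k) //= big1 ?addr0 /ek ?eqxx ?mul1r // => j /negbTE ->.
by rewrite mul0r.
Qed.

Lemma dt_ek u k : dt u (ek k) = u k.
Proof. exact: (Lv_ek (\row_j u j) k) || (rewrite /dt (bigD1 k) //= big1 ?addr0 /ek ?eqxx ?mulr1 // => j /negbTE ->; by rewrite mulr0). Qed.

Lemma lin_nz a : a != 0 -> lin_form a != 0.
Proof.
move=> ha; have [k hk] : exists k, a 0 k != 0.
  apply/existsP; apply: contraR ha => /existsPn h; apply/eqP/rowP => k.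
  by rewrite mxE; move: (h k); rewrite negbK => /eqP.
by apply: contra hk => /eqP h; rewrite -Lv_ek -evlin h meval0.
Qed.

Section Arr.
Variables (d : nat) (l : 'I_d -> 'rV[CC]_3).
Hypothesis hl : line_arrangement l.

Lemma line_nz i : exists k, l i 0 k != 0.
Proof.
have ha := hl.1 i.
apply/existsP; apply: contraR ha => /existsPn h; apply/eqP/rowP => k.
by rewrite mxE; move: (h k); rewrite negbK => /eqP.
Qed.

Lemma lines_cr i j : i != j -> exists k, cr (rv (l i)) (rv (l j)) k != 0.
Proof.
move=> ij; case: (boolP [exists k, cr (rv (l i)) (rv (l j)) k != 0]) => [/existsP //|/existsPn h].
have h' : forall k, cr (rv (l i)) (rv (l j)) k = 0 by move=> k; apply/eqP; rewrite -[_ == _]negbK h.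
case: (line_nz j) => k0 hk0.
exfalso; apply: (hl.2 i j ij); exists (l i 0 k0 / l j 0 k0); apply/rowP => k.
by rewrite mxE; exact: (cr_prop h' hk0 k).
Qed.

Lemma cr_lines_on i j q : Lv (l i) q = 0 -> Lv (l j) q = 0 ->
  forall k, cr (cr (rv (l i)) (rv (l j))) q k = 0.
Proof. by move=> hi hj k; rewrite cr_cr; rewrite /Lv in hi hj; rewrite /dt hi hj !mulr0 subrr. Qed.

Lemma Lv_cr_self i j : Lv (l i) (cr (rv (l i)) (rv (l j))) = 0.
Proof. exact: dt_cr_self. Qed.

Lemma size_s : size (index_enum 'I_d) = d.
Proof. by rewrite -[RHS]card_ord -sum1_card -sum1_size. Qed.

Lemma f_nz : arr_poly l != 0.
Proof.
rewrite /arr_poly; apply/prodf_neq0 => i _; exact: lin_nz (hl.1 i).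
Qed.

Lemma Eu_f : Eu (arr_poly l) = d%:R * arr_poly l.
Proof. by rewrite (_ : arr_poly l = Pr l (index_enum 'I_d)) // Eu_Pr size_s. Qed.

Lemma grad0_two q : (0 < d)%N -> (forall j, ((arr_poly l)^`M(j)).@[q] = 0) ->
  exists i j, [/\ i != j, Lv (l i) q = 0 & Lv (l j) q = 0].
Proof.
move=> d0 hq.
have fq : (arr_poly l).@[q] = 0.
  have := congr1 (meval q) Eu_f; rewrite evEu sum3 !hq !mulr0 !addr0 mevalM mevalMn meval1.
  by move/esym/eqP; rewrite mulf_eq0 pnatr_eq0 (negbTE (lt0n_neq0 d0)) /= => /eqP.
have key : forall k, (exists i j, [/\ i != j, Lv (l i) q = 0 & Lv (l j) q = 0]) \/
     exists i, Lv (l i) q = 0 /\ l i 0 k = 0.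
  move=> k; have := @ev_Dd_Pr d l (index_enum 'I_d) (ek k) q (index_enum_uniq _) fq.
  rewrite (_ : Pr l _ = arr_poly l) // Dd_ek hq => /(_ erefl).
  case=> [[i [j [_ _ ij hi hj]]]|[i _ [hi hk]]]; first by left; exists i, j.
  by right; exists i; rewrite -Lv_ek.
case: (key i0) => [//|[a [ha0 ha]]].
case: (key i1) => [//|[b [hb0 hb]]].
case: (key i2) => [//|[c [hc0 hc]]].
have [ab|ab] := eqVneq a b; last by exists a, b.
have [ac|ac] := eqVneq a c; last by exists a, c.
subst b c; case: (line_nz a) => k; move: k; apply: ord3P; by rewrite ?ha ?hb ?hc eqxx.
Qed.

End Arr.

Notation pih := (pihomog mdeg).

Lemma piXr n dl m (r : SS) : r \is dl.-homog ->
  pih n ('X_[m] * r) = if (mdeg m + dl == n)%N then 'X_[m] * r else 0.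
Proof.
move=> hr; have hX : 'X_[m] * r \is (mdeg m + dl).-homog.
  by apply: dhomogM => //; rewrite dhomogX.
case: eqP => [e|ne]; first by rewrite pihomog_dE // -e.
by apply: pihomog_ne0 hX; apply/eqP.
Qed.

Lemma piM (n dl : nat) (U r : SS) : r \is dl.-homog ->
  pih n (U * r) = if (dl <= n)%N then pih (n - dl) U * r else 0.
Proof.
move=> hr; rewrite {1}[U]mpolyE mulr_suml raddf_sum /=.
case: ifP => hle.
  rewrite [X in pih (n - dl) X]mpolyE raddf_sum mulr_suml /=; apply: eq_bigr => m _.
  rewrite -scalerAl !linearZ /= -scalerAl (piXr _ _ hr) pihomogX; congr (_ *: _).
  case: eqP => [e|ne]; case: eqP => [e'|ne'] //; try by rewrite mul0r.
  - exfalso; apply: ne'; change (mdeg m = n - dl)%N; lia.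
  - exfalso; apply: ne; change (mdeg m = n - dl)%N in e'; lia.
apply: big1 => m _; rewrite -scalerAl linearZ /= (piXr _ _ hr).
by case: eqP => [e|_]; [exfalso; move: hle; lia | rewrite scaler0].
Qed.

Definition linF (w : 'I_3 -> CC) : SS := lin_form (\row_j w j).

Lemma ev_linF w v : (linF w).@[v] = dt w v.
Proof. by rewrite evlin /Lv /dt; apply: eq_bigr => k _; rewrite mxE. Qed.

Lemma linF_nz w : (exists k, w k != 0) -> linF w != 0.
Proof.
case=> k hk; apply: lin_nz; apply: contra hk => /eqP h.
by have := congr1 (fun M : 'rV[CC]_3 => M 0 k) h; rewrite !mxE => ->.
Qed.

Lemma perp_exists (P : 'I_3 -> CC) : (exists k, P k != 0) ->
  exists w, (exists k, w k != 0) /\ forall b, (exists c, forall j, b j = c * P j) -> dt w b = 0.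
Proof.
move=> hP.
have key : exists k, exists k', cr P (ek k) k' != 0.
  case: (boolP [exists k, exists k', cr P (ek k) k' != 0]) => [/existsP[k /existsP[k' h]]|/existsPn h].
    by exists k, k'.
  exfalso; case: hP => k0; apply/negP; rewrite negbK.
  have z : forall k k', cr P (ek k) k' = 0.
    by move=> k k'; move: (h k) => /existsPn /(_ k'); rewrite negbK => /eqP.
  have e0 := cr_prop (z i0) (_ : ek i0 i0 != 0).
  have e1 := cr_prop (z i1) (_ : ek i1 i1 != 0).
  have o : forall k, ek k k != 0 by move=> k; rewrite /ek eqxx oner_eq0.
  have Z : forall j, P j = 0.
    apply: ord3P.
    - by rewrite (e1 (o _) i0) /ek /= mulr0.
    - by rewrite (e0 (o _) i1) /ek /= mulr0.
    - by rewrite (e0 (o _) i2) /ek /= mulr0.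
  by rewrite Z.
case: key => k [k' hk]; exists (cr P (ek k)); split; first by exists k'.
move=> b [c hc]; rewrite (_ : dt _ b = c * dt P (cr P (ek k))); first by rewrite dt_cr_self mulr0.
by rewrite !dtE !hc; ring.
Qed.

Section Pt.
Variables (d : nat) (l : 'I_d -> 'rV[CC]_3) (p : 'rV[CC]_3).
Hypothesis hl : line_arrangement l.
Hypothesis hip : intersection_point l p.

Local Notation P := (rv p).
Definition Iset := [seq i <- index_enum 'I_d | on_line (l i) p].
Definition Jset := [seq i <- index_enum 'I_d | ~~ on_line (l i) p].
Local Notation g := (Pr l Iset).
Local Notation h := (Pr l Jset).

Lemma P_nz : exists k, P k != 0.
Proof.
have hp := hip.1; apply/existsP; case: (boolP [exists k, P k != 0]) => // /existsPn h0.
by exfalso; move/negP: hp; apply; apply/eqP/rowP => k; rewrite mxE; move: (h0 k); rewrite negbK => /eqP.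
Qed.

Lemma f_split : arr_poly l = g * h.
Proof. by rewrite /arr_poly (bigID (fun i => on_line (l i) p)) /= /Pr !big_filter. Qed.

Lemma mult_size : multiplicity l p = size Iset.
Proof. by rewrite /multiplicity cardsE size_filter -sum1_count -sum1_card; apply: eq_bigl. Qed.

Lemma size_IJ : (size Iset + size Jset)%N = d.
Proof. by rewrite !size_filter count_predC size_s. Qed.

Lemma Ddg : Dd P g = 0.
Proof. by apply: Dd_Pr0 => i; rewrite mem_filter => /andP[/eqP]. Qed.

Lemma uJ : uniq Jset.
Proof. by rewrite filter_uniq // index_enum_uniq. Qed.

Lemma J_off i : i \in Jset -> Lv (l i) P != 0.
Proof. by rewrite mem_filter => /andP[]. Qed.

Definition rho (j : 'I_3) : SS := Dd P h * 'X_j - (d%:R * P j)%:MP * h.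

Lemma rho_AR : in_AR (arr_poly l) rho.
Proof.
have E1 := Eu_f l.
have E2 : Dd P (arr_poly l) = g * Dd P h by rewrite f_split DdM Ddg mul0r add0r.
rewrite /in_AR (_ : \sum_(j < 3) rho j * (arr_poly l)^`M(j) =
   Dd P h * Eu (arr_poly l) - d%:R * h * Dd P (arr_poly l)).
  by rewrite E1 E2 f_split; ring.
rewrite /rho /Eu /Dd !sum3 !mpolyCM (rmorph_nat (@mpolyC 3 CC)) ; ring.
Qed.

Lemma rho_homog j : rho j \is (size Jset).-homog.
Proof.
rewrite /rho; apply: rpredB.
  case E: Jset => [|x s]; first by rewrite Pr_nil Dd1 mul0r rpred0.
  rewrite /= -[(size s).+1]addn1; apply: dhomogM; first exact: (Dd_Pr_homog l P (x :: s)).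
  by rewrite (@dhomogX _ _ _ _ U_(j)); exact/eqP/(mdeg1 j).
by rewrite mul_mpolyC; apply: dhomogZ; apply: Pr_homog.
Qed.

Lemma evDdP_h : (Dd P h).@[P] = (size Jset)%:R * h.@[P].
Proof.
have := congr1 (meval P) (Eu_Pr l Jset); rewrite evEu evDd mevalM mevalMn meval1 => <-.
by [].
Qed.

Lemma rho_ev j : (rho j).@[P] = ((size Jset)%:R - d%:R) * h.@[P] * P j.
Proof.
rewrite /rho mevalB !mevalM mevalXU mevalC evDdP_h; ring.
Qed.

Lemma hP_nz : h.@[P] != 0.
Proof.
rewrite ev_Pr prodf_seq_neq0; apply/allP => i hi /=; exact: J_off.
Qed.

Lemma rho_P_nz : exists k, (rho k).@[P] != 0.
Proof.
case: P_nz => k hk; exists k; rewrite rho_ev !mulf_neq0 ?hP_nz //.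
have -> : (d%:R : CC) = (size Iset)%:R + (size Jset)%:R by rewrite -natrD size_IJ.
rewrite (_ : _ - _ = - (size Iset)%:R); last by ring.
rewrite oppr_eq0 pnatr_eq0.
by rewrite -mult_size -lt0n; apply: leq_trans hip.2.
Qed.

Lemma d_pos : (0 < d)%N.
Proof. by rewrite -size_IJ -mult_size (leq_trans _ (leq_addr _ _)) // (leq_trans _ hip.2). Qed.

Lemma prim e (u : SS) (r : 'I_3 -> SS) : (0 < e)%N -> u \is e.-homog ->
  (forall j, rho j = u * r j) -> False.
Proof.
move=> e0 hu hr.
have uP : u.@[P] != 0.
  by case: rho_P_nz => k; rewrite hr mevalM mulf_eq0 negb_or => /andP[].
case: (perp_exists P_nz) => w [wnz wperp].
pose cc i j := cr (rv (l i)) (rv (l j)).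
pose Phi := u * linF w * \prod_(i <- Jset) \prod_(j <- Jset | i != j) linF (cr (cc i j) P).
have Phinz : Phi != 0.
  rewrite !mulf_neq0 //.
  - by apply: contra uP => /eqP ->; rewrite meval0.
  - exact: linF_nz.
  rewrite prodf_seq_neq0; apply/allP => i hi /=; rewrite prodf_seq_neq0; apply/allP => j hj /=.
  apply/implyP => ij; apply: linF_nz.
  case: (boolP [exists k, cr (cc i j) P k != 0]) => [/existsP //|/existsPn hz]; exfalso.
  have z : forall k, cr (cc i j) P k = 0.
    by move=> k; move: (hz k); rewrite negbK => /eqP.
  case: P_nz => k0 hk0.
  have cl := cr_prop z hk0.
  have : Lv (l i) (cc i j) = (cc i j k0 / P k0) * Lv (l i) P.
    by rewrite /Lv mulr_sumr; apply: eq_bigr => k _; rewrite cl; ring.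
  rewrite Lv_cr_self => /esym /eqP; rewrite mulf_eq0 (negbTE (J_off hi)) orbF => /eqP l0.
  case: (lines_cr hl ij) => k; rewrite -/(cc i j) (cl k) l0 mul0r eqxx //.
case: (mpoly_nonroot Phinz) => b; rewrite /Phi !mevalM rmorph_prod.
under eq_bigr do rewrite rmorph_prod.
rewrite !mulf_eq0 !negb_or => /andP[/andP[ub wb] pb].
rewrite ev_linF in wb.
have pb' : forall i j, i \in Jset -> j \in Jset -> i != j -> dt (cr (cc i j) P) b != 0.
  move=> i j hi hj ij; move: pb; rewrite prodf_seq_neq0 => /allP /(_ i hi) /=.
  by rewrite prodf_seq_neq0 => /allP /(_ j hj) /=; rewrite ij ev_linF.
have [t ht] := top_root (restr_top P b hu) ub e0.
move: ht; rewrite /root restr_horner => /eqP qz.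
set q := fun j => P j + t * b j.
have t0 : t != 0.
  apply: contra uP => /eqP t0; rewrite -qz; apply/eqP; apply: meval_eq => j.
  by rewrite /q t0 mul0r addr0.
have rq : forall k, (Dd P h).@[q] * q k - d%:R * P k * h.@[q] = 0.
  move=> k; have := hr k; rewrite /rho => /(congr1 (meval q)).
  by rewrite mevalM qz mul0r mevalB !mevalM mevalXU mevalC.
have dnz : (d%:R : CC) != 0 by rewrite pnatr_eq0 -lt0n d_pos.
case: (eqVneq (Dd P h).@[q] 0) => Dq.
  have hq : h.@[q] = 0.
    case: P_nz => k hk; move: (rq k); rewrite Dq mul0r sub0r => /eqP.
    by rewrite oppr_eq0 !mulf_eq0 (negbTE dnz) (negbTE hk) /= => /eqP.
  case: (ev_Dd_Pr uJ hq Dq) => [[i [j [hi hj ij hvi hvj]]]|[i hi [_ hPi]]]; last first.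
    by move: (J_off hi); rewrite hPi eqxx.
  have z := cr_lines_on hvi hvj.
  have E : dt (cr (cc i j) P) q = t * dt (cr (cc i j) P) b.
    by rewrite /q !dtE ?cr0 ?cr1 ?cr2; ring.
  have E' : dt (cr (cc i j) P) q = - (P i0 * cr (cc i j) q i0 + P i1 * cr (cc i j) q i1 + P i2 * cr (cc i j) q i2).
    by rewrite !dtE ?cr0 ?cr1 ?cr2; ring.
  move: E'; rewrite /cc !z !mulr0 !addr0 oppr0 -/(cc i j) E => /eqP; rewrite mulf_eq0 (negbTE t0) /=.
  by rewrite (negbTE (pb' i j hi hj ij)).
have qk : forall k, q k = (d%:R * h.@[q] / (Dd P h).@[q]) * P k.
  move=> k; have := rq k; move/eqP; rewrite subr_eq0 => /eqP ek.
  by apply: (mulfI Dq); rewrite ek; field.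
move: wb; rewrite (wperp b) ?eqxx //.
exists ((d%:R * h.@[q] / (Dd P h).@[q] - 1) / t) => j.
have := qk j; rewrite /q => ej; apply: (mulfI t0).
rewrite mulrA mulrCA mulfV // mulr1 mulrBl mul1r -ej; ring.
Qed.

End Pt.

Section Main.
Variables (d : nat) (l : 'I_d -> 'rV[CC]_3) (p : 'rV[CC]_3).
Hypothesis hl : line_arrangement l.
Hypothesis hip : intersection_point l p.

Lemma rho_ne0 : ~ (forall j, rho l p j = 0).
Proof.
move=> z; case: (rho_P_nz hip) => k; by rewrite z meval0 eqxx.
Qed.

Lemma reduce (n0 da db : nat) (A B C : 'I_3 -> SS) (U V W : SS) :
  n0 = size (Jset l p) -> (n0 < db)%N ->
  (forall j, A j \is da.-homog) -> (forall j, B j \is db.-homog) -> (forall j, C j \is db.-homog) ->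
  (forall j, rho l p j = U * A j + V * B j + W * C j) -> n0 = da.
Proof.
move=> en0 hlt hA hB hC hU.
have key : forall j, rho l p j = (if (da <= n0)%N then pih (n0 - da) U * A j else 0).
  move=> j; rewrite -(pihomog_dE (rho_homog l p j)) -en0 hU !raddfD /=.
  rewrite (piM _ _ (hA j)) (piM _ _ (hB j)) (piM _ _ (hC j)).
  by rewrite (leqNgt db n0) hlt /= !addr0.
case: (leqP da n0) => hle; last by exfalso; apply: rho_ne0 => j; rewrite key leqNgt hle.
case: (posnP (n0 - da)) => hz; first lia.
exfalso; apply: (@prim d l p hl hip (n0 - da) (pih (n0 - da) U) A hz (pihomogP _ _ _)).
by move=> j; rewrite key hle.
Qed.

Lemma part_nf d1 d2 : nearly_free_with_exponents (arr_poly l) d d1 d2 ->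
  multiplicity l p = d2 \/ (multiplicity l p <= d1)%N.
Proof.
move=> [hd12 [hsum [rh [h [hAR hhom hgen _ _]]]]].
case: (leqP (multiplicity l p) d1) => hm; [by right|left].
have sIJ := size_IJ l p; have ms := mult_size l p.
case: (hgen _ (rho_AR l p)) => U hU.
suff : size (Jset l p) = d1 by lia.
apply: (@reduce _ d1 d2 (rh i0) (rh i1) (rh i2) (U i0) (U i1) (U i2) erefl).
- lia.
- by move=> j; have := hhom i0 j.
- by move=> j; have := hhom i1 j.
- by move=> j; have := hhom i2 j.
- by move=> j; rewrite hU sum3.
Qed.

Lemma part_free d1 d2 : (d = (d1 + d2).+1)%N -> free_with_exponents (arr_poly l) d1 d2 ->
  multiplicity l p = d2.+1 \/ (multiplicity l p <= d1.+1)%N.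
Proof.
move=> hd [hd12 [r1 [r2 [hr1 hr2 hh1 hh2 hgen]]]].
case: (leqP (multiplicity l p) d1.+1) => hm; [by right|left].
have sIJ := size_IJ l p; have ms := mult_size l p.
case: (hgen _ (rho_AR l p)) => uv [huv _].
suff : size (Jset l p) = d1 by lia.
apply: (@reduce _ d1 d2 r1 r2 (fun _ => 0) uv.1 uv.2 0 erefl).
- lia.
- exact: hh1.
- exact: hh2.
- by move=> j; exact: dhomog0.
- by move=> j; rewrite huv mulr0 addr0.
Qed.

End Main.

Notation PC := {poly CC}.

Section Gen.
Variable R : comNzRingType.
Definition Ev (k : 'I_3) : 'I_3 -> R := fun i => (i == k)%:R.

Lemma cr_comb (X Y R1 R2 : 'I_3 -> R) a b a' b' :
  (forall i, X i = a * R1 i + b * R2 i) -> (forall i, Y i = a' * R1 i + b' * R2 i) ->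
  forall j, cr X Y j = (a * b' - a' * b) * cr R1 R2 j.
Proof. move=> e1 e2; apply: ord3P; rewrite ?cr0 ?cr1 ?cr2 !e1 !e2; ring. Qed.

Lemma cr_XY (X Y F : 'I_3 -> R) kk :
  X kk = 0 -> Y kk = 0 ->
  (forall j, cr X Y j = F kk * F j) -> forall j, cr X Y j = F kk * F j.
Proof. by []. Qed.

Lemma crE0 (F : 'I_3 -> R) : [/\ cr (Ev i0) F i0 = 0, cr (Ev i0) F i1 = - F i2 & cr (Ev i0) F i2 = F i1].
Proof. rewrite !cr0 !cr1 !cr2 /Ev /=; split; ring. Qed.
Lemma crE1 (F : 'I_3 -> R) : [/\ cr (Ev i1) F i0 = F i2, cr (Ev i1) F i1 = 0 & cr (Ev i1) F i2 = - F i0].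
Proof. rewrite !cr0 !cr1 !cr2 /Ev /=; split; ring. Qed.
Lemma crE2 (F : 'I_3 -> R) : [/\ cr (Ev i2) F i0 = - F i1, cr (Ev i2) F i1 = F i0 & cr (Ev i2) F i2 = 0].
Proof. rewrite !cr0 !cr1 !cr2 /Ev /=; split; ring. Qed.

Lemma kos01 (F : 'I_3 -> R) j : cr (cr (Ev i0) F) (cr (Ev i1) F) j = F i2 * F j.
Proof.
case: (crE0 F) => a0 a1 a2; case: (crE1 F) => b0 b1 b2.
set X := cr (Ev i0) F in a0 a1 a2 *; set Y := cr (Ev i1) F in b0 b1 b2 *.
move: j; apply: ord3P; rewrite ?cr0 ?cr1 ?cr2 ?a0 ?a1 ?a2 ?b0 ?b1 ?b2; ring.
Qed.
Lemma kos12 (F : 'I_3 -> R) j : cr (cr (Ev i1) F) (cr (Ev i2) F) j = F i0 * F j.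
Proof.
case: (crE1 F) => a0 a1 a2; case: (crE2 F) => b0 b1 b2.
set X := cr (Ev i1) F in a0 a1 a2 *; set Y := cr (Ev i2) F in b0 b1 b2 *.
move: j; apply: ord3P; rewrite ?cr0 ?cr1 ?cr2 ?a0 ?a1 ?a2 ?b0 ?b1 ?b2; ring.
Qed.
Lemma kos20 (F : 'I_3 -> R) j : cr (cr (Ev i2) F) (cr (Ev i0) F) j = F i1 * F j.
Proof.
case: (crE2 F) => a0 a1 a2; case: (crE0 F) => b0 b1 b2.
set X := cr (Ev i2) F in a0 a1 a2 *; set Y := cr (Ev i0) F in b0 b1 b2 *.
move: j; apply: ord3P; rewrite ?cr0 ?cr1 ?cr2 ?a0 ?a1 ?a2 ?b0 ?b1 ?b2; ring.
Qed.
End Gen.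

Lemma uni_key (F R1 R2 A al be : 'I_3 -> PC) :
  dt R1 F = 0 -> dt R2 F = 0 -> dt A F = 1 ->
  (forall k j, cr (Ev _ k) F j = al k * R1 j + be k * R2 j) ->
  exists c0 : CC, c0 != 0 /\ forall k, cr R1 R2 k = c0 *: F k.
Proof.
move=> d1 d2 dA hK.
set W := cr R1 R2.
have WF : forall i j, W i * F j = W j * F i.
  apply: cr_eq0 => k; rewrite /W cr_cr d1 d2 !mulr0 subrr //.
set c := dt A W.
have Wc : forall k, W k = c * F k.
  move=> k; rewrite -[W k]mulr1 -dA /c !dtE.
  rewrite mulrDr mulrDr !(mulrCA (W k)) (WF k i0) (WF k i1) (WF k i2); ring.
have KK : forall k1 k2 j, cr (cr (Ev _ k1) F) (cr (Ev _ k2) F) j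
     = (al k1 * be k2 - al k2 * be k1) * W j.
  by move=> k1 k2 j; apply: cr_comb; apply: hK.
have Fnz : exists k, F k != 0.
  case: (boolP [exists k, F k != 0]) => [/existsP //|/existsPn h]; exfalso.
  have z : forall k, F k = 0 by move=> k; move: (h k); rewrite negbK => /eqP.
  by move: dA; rewrite dtE !z !mulr0 !addr0 => /eqP; rewrite eq_sym oner_eq0.
case: Fnz => k0 hk0.
have div : forall k1 k2 kk, (forall j, cr (cr (Ev _ k1) F) (cr (Ev _ k2) F) j = F kk * F j) ->
   F kk = ((al k1 * be k2 - al k2 * be k1) * c).
  move=> k1 k2 kk hc; apply: (mulIf hk0); rewrite -hc KK Wc; ring.
have cu : c \is a GRing.unit.
  apply/unitrPr; exists (A i0 * (al i1 * be i2 - al i2 * be i1) + A i1 * (al i2 * be i0 - al i0 * be i2)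
                       + A i2 * (al i0 * be i1 - al i1 * be i0)).
  rewrite -dA dtE {1}(div _ _ _ (kos12 F)) {1}(div _ _ _ (kos20 F)) {1}(div _ _ _ (kos01 F)); ring.
move: cu; rewrite poly_unitE => /andP[/size_poly1P [c0 c0nz ec] _].
exists c0; split=> // k; rewrite Wc ec mul_polyC //.
Qed.

Lemma restr0 a b : restr a b 0 = 0.
Proof. exact: mmap0. Qed.

Lemma restr_cr a b (u v : 'I_3 -> SS) k :
  restr a b (cr u v k) = cr (fun i => restr a b (u i)) (fun i => restr a b (v i)) k.
Proof. move: k; apply: ord3P; by rewrite ?cr0 ?cr1 ?cr2 restrB !restrM. Qed.

Lemma restr_dt a b (u v : 'I_3 -> SS) :
  restr a b (dt u v) = dt (fun i => restr a b (u i)) (fun i => restr a b (v i)).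
Proof. by rewrite !dtE !restrD !restrM. Qed.

Lemma restr_nat a b n : restr a b n%:R = n%:R.
Proof. by rewrite /restr rmorph_nat. Qed.

Lemma size_top k Q c : top k Q c -> c != 0 -> size Q = k.+1.
Proof.
move=> [sQ cQ] c0; apply/eqP; rewrite eqn_leq sQ /=.
by rewrite ltnNge; apply/negP => hs; move: c0; rewrite -cQ nth_default // eqxx.
Qed.

Lemma cr_homog (u v : 'I_3 -> SS) d1 d2 :
  (forall j, u j \is d1.-homog) -> (forall j, v j \is d2.-homog) -> forall k, cr u v k \is (d1 + d2).-homog.
Proof.
move=> hu hv; apply: ord3P; rewrite ?cr0 ?cr1 ?cr2; apply: rpredB; exact: dhomogM.
Qed.

Definition mk3 (T : Type) (x y z : T) : 'I_3 -> T :=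
  fun j => if val j == 0%N then x else if val j == 1%N then y else z.

Lemma bezout3 (F0 F1 F2 : PC) : (forall x, ~~ root F0 x || ~~ root F1 x || ~~ root F2 x) ->
  exists A : 'I_3 -> PC, dt A (mk3 F0 F1 F2) = 1.
Proof.
move=> hx.
have cop : coprimep (gcdp F0 F1) F2.
  apply/Pdiv.ClosedField.coprimepP => x; rewrite root_gcd => /andP[r0 r1].
  by move: (hx x); rewrite r0 r1.
case/Bezout_eq1_coprimepP: cop => [[u1 u2]] /= hu.
case/eqpP: (egcdpE F0 F1) => [[c1 c2]] /= /andP[c1n c2n] hc.
have G : gcdp F0 F1 = (c2 / c1) *: ((egcdp F0 F1).1 * F0 + (egcdp F0 F1).2 * F1).
  by rewrite -[LHS]scale1r -(mulVf c1n) -[(_ * c1) *: _]scalerA hc scalerA mulrC.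
exists (mk3 (u1 * (c2 / c1)%:P * (egcdp F0 F1).1) (u1 * (c2 / c1)%:P * (egcdp F0 F1).2) u2).
rewrite dtE /mk3 /= -hu G -mul_polyC; ring.
Qed.

Lemma det_id (a b c : 'I_3 -> CC) x :
  dt (cr b c) a = b i0 * cr c (fun j => a j + x * b j) i0 + b i1 * cr c (fun j => a j + x * b j) i1
     + b i2 * cr c (fun j => a j + x * b j) i2.
Proof. rewrite !dtE !cr0 !cr1 !cr2; ring. Qed.

Lemma dt_sym (R : comNzRingType) (u v : 'I_3 -> R) : dt u v = dt v u.
Proof. by rewrite !dtE; ring. Qed.

Section Saito.
Variables (d : nat) (l : 'I_d -> 'rV[CC]_3).
Hypothesis hl : line_arrangement l.
Hypothesis d0 : (0 < d)%N.

Lemma saito d1 d2 : free_with_exponents (arr_poly l) d1 d2 -> d = (d1 + d2).+1.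
Proof.
move=> [_ [r1 [r2 [hr1 hr2 hh1 hh2 hgen]]]].
set f := arr_poly l.
set g : 'I_3 -> SS := fun j => f^`M(j).
have uniq0 : forall a b : SS, (forall j, a * r1 j + b * r2 j = 0) -> a = 0 /\ b = 0.
  move=> a b hab.
  have hz : in_AR f (fun _ => 0) by rewrite /in_AR big1 // => j _; rewrite mul0r.
  case: (hgen _ hz) => uv [_ hu].
  have e1 := hu (0, 0) (fun j => esym (etrans (congr2 _ (mul0r _) (mul0r _)) (addr0 _))).
  have e2 := hu (a, b) (fun j => esym (hab j)).
  by move: e2; rewrite e1 => -[<- <-].
have r1nz : exists j, r1 j != 0.
  case: (boolP [exists j, r1 j != 0]) => [/existsP //|/existsPn h]; exfalso.
  have [h1 _] : (1 : SS) = 0 /\ (0 : SS) = 0.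
    by apply: uniq0 => j; move: (h j) => /negPn /eqP ->; rewrite mulr0 mul0r addr0.
  by move/eqP: h1; rewrite oner_eq0.
have wnz : exists k, cr r1 r2 k != 0.
  case: (boolP [exists k, cr r1 r2 k != 0]) => [/existsP //|/existsPn h]; exfalso.
  have z : forall k, cr r1 r2 k = 0 by move=> k; move: (h k); rewrite negbK => /eqP.
  case: r1nz => j0 hj0.
  have [_ e] : - r2 j0 = 0 /\ r1 j0 = 0.
    by apply: uniq0 => j; rewrite mulNr (cr_eq0 z j0 j); ring.
  by move/eqP: hj0; rewrite e.
case: wnz => k1 hk1.
have fnz : f != 0 := f_nz hl.
case: (mpoly_nonroot (mulf_neq0 fnz hk1)) => b; rewrite mevalM mulf_eq0 negb_or => /andP[fb wb].
pose cc i j := cr (rv (l i)) (rv (l j)).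
pose Phi := \prod_(i <- index_enum 'I_d) \prod_(j <- index_enum 'I_d | i != j) linF (cr b (cc i j)).
have Phinz : Phi != 0.
  rewrite prodf_seq_neq0; apply/allP => i _ /=; rewrite prodf_seq_neq0; apply/allP => j _ /=.
  apply/implyP => ij; apply: linF_nz.
  case: (boolP [exists k, cr b (cc i j) k != 0]) => [/existsP //|/existsPn hz]; exfalso.
  have z : forall k, cr b (cc i j) k = 0 by move=> k; move: (hz k); rewrite negbK => /eqP.
  case: (lines_cr hl ij) => kc hkc.
  have cl := cr_prop z hkc.
  have : Lv (l i) b = (b kc / cc i j kc) * Lv (l i) (cc i j).
    by rewrite /Lv mulr_sumr; apply: eq_bigr => k _; rewrite cl; ring.
  rewrite Lv_cr_self mulr0 => lb.
  move: fb; rewrite /f (_ : arr_poly l = Pr l (index_enum 'I_d)) // ev_Pr.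
  by rewrite (bigD1_seq i) ?mem_index_enum ?index_enum_uniq //= lb mul0r eqxx.
case: (mpoly_nonroot Phinz) => a; rewrite /Phi rmorph_prod.
under eq_bigr do rewrite rmorph_prod.
move=> ha.
have ha' : forall i j, i != j -> dt (cr b (cc i j)) a != 0.
  move=> i j ij; move: ha; rewrite prodf_seq_neq0 => /allP /(_ i (mem_index_enum _)) /=.
  by rewrite prodf_seq_neq0 => /allP /(_ j (mem_index_enum _)) /=; rewrite ij ev_linF.
set FF := fun j => restr a b (g j).
set R1 := fun j => restr a b (r1 j).
set R2 := fun j => restr a b (r2 j).
have e1 : dt r1 g = 0 := hr1.
have e2 : dt r2 g = 0 := hr2.
have dR1 : dt R1 FF = 0 by rewrite /R1 /FF -restr_dt e1; exact: restr0.
have dR2 : dt R2 FF = 0 by rewrite /R2 /FF -restr_dt e2; exact: restr0.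
have nocom : forall x, ~~ root (FF i0) x || ~~ root (FF i1) x || ~~ root (FF i2) x.
  move=> x; rewrite -!negb_and; apply/negP => /andP[/andP[x0 x1] x2].
  set q := fun j => a j + x * b j.
  have gq : forall j, (g j).@[q] = 0.
    by apply: ord3P; [move/eqP: x0 | move/eqP: x1 | move/eqP: x2]; rewrite /FF restr_horner.
  case: (grad0_two hl d0 gq) => i [j [ij hvi hvj]].
  have z := cr_lines_on hvi hvj.
  have E := det_id a b (cc i j) x.
  by move: (ha' i j ij); rewrite E /cc !z !mulr0 !addr0 eqxx.
case: (bezout3 nocom) => A hA.
have hA' : dt A FF = 1.
  by rewrite -hA !dtE /mk3 /=.
have Kos : forall k, exists al be : PC, forall j, cr (Ev _ k) FF j = al * R1 j + be * R2 j.
  move=> k.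
  have hK : in_AR f (fun j => cr (Ev _ k) g j).
    by rewrite /in_AR sum3 ?cr0 ?cr1 ?cr2; ring.
  case: (hgen _ hK) => uv [huv _].
  exists (restr a b uv.1), (restr a b uv.2) => j.
  have := congr1 (restr a b) (huv j); rewrite restrD !restrM restr_cr => <-.
  by rewrite /cr !restr_nat.
case: (Kos i0) => a0 [b0 h0]; case: (Kos i1) => a1 [b1 h1]; case: (Kos i2) => a2 [b2 h2].
have := @uni_key FF R1 R2 A (mk3 a0 a1 a2) (mk3 b0 b1 b2) dR1 dR2 hA' _.
case=> [|c0 [c0n hc]].
  apply: ord3P => j; [exact: h0 | exact: h1 | exact: h2].
have Wk : forall k, cr R1 R2 k = restr a b (cr r1 r2 k) by move=> k; rewrite restr_cr.
have topW : forall k, top (d1 + d2) (restr a b (cr r1 r2 k)) ((cr r1 r2 k).@[b]).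
  by move=> k; apply: restr_top; apply: cr_homog.
have gh : forall j, g j \is d.-1.-homog.
  move=> j; rewrite /g -Dd_ek /f (_ : arr_poly l = Pr l (index_enum 'I_d)) //.
  by have := Dd_Pr_homog l (ek j) (index_enum 'I_d); rewrite size_s.
have topF : forall j, top d.-1 (FF j) ((g j).@[b]) by move=> j; apply: restr_top.
have sz : forall k, size (FF k) = size (restr a b (cr r1 r2 k)).
  by move=> k; rewrite -Wk hc size_scale.
have ineq1 : ((d1 + d2).+1 <= d)%N.
  have s1 := size_top (topW k1) wb.
  have s2 := sz k1.
  case: (topF k1) => s3 _.
  move: s3; rewrite s2 s1 (prednK d0) => H; exact: H.
have [k2 hk2] : exists k, (g k).@[b] != 0.
  case: (boolP [exists k, (g k).@[b] != 0]) => [/existsP //|/existsPn h]; exfalso.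
  have z : forall k, (g k).@[b] = 0 by move=> k; move: (h k); rewrite negbK => /eqP.
  have z' : forall k, ((arr_poly l)^`M(k)).@[b] = 0 := z.
  have := congr1 (meval b) (Eu_f l); rewrite evEu sum3 !z' !mulr0 !addr0 mevalM mevalMn meval1.
  move=> /esym /eqP; rewrite mulf_eq0 pnatr_eq0 (negbTE (lt0n_neq0 d0)) /= => H.
  by move: fb; rewrite H.
have ineq2 : (d <= (d1 + d2).+1)%N.
  have s1 := size_top (topF k2) hk2.
  have s2 := sz k2.
  case: (topW k2) => s3 _.
  move: s1; rewrite (prednK d0) s2 => e; rewrite -e; exact: s3.
apply/eqP; rewrite eqn_leq ineq2; exact: ineq1.
Qed.

End Saito.


Theorem corollary2p2 (d : nat) (l : 'I_d -> 'rV[CC]_3) (p : 'rV[CC]_3)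
    (d1 d2 : nat) :
  line_arrangement l ->
  intersection_point l p ->
  (free_with_exponents (arr_poly l) d1 d2 ->
     multiplicity l p = d2.+1 \/ (multiplicity l p <= d1.+1)%nat) /\
  (nearly_free_with_exponents (arr_poly l) d d1 d2 ->
     multiplicity l p = d2 \/ (multiplicity l p <= d1)%nat).
Proof.
move=> hl hip; split.
  move=> hfree; apply: (part_free hl hip _ hfree).
  exact: (saito hl (d_pos hip) hfree).
by move=> hnf; exact: (part_nf hl hip hnf).
Qed.
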